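(* (a) The optimal value function $\mu$ is upper semicontinuous at $0$. (b) If $X^\infty\cap\mathcal{K}(f)=\{0\}$, then $\mu$ is lower semicontinuous at $0$, and hence continuous at $0$.
   Context: Standing assumptions: $f:\mathbb{R}^n\to\mathbb{R}\cup\{\pm\infty\}$ is proper (never $-\infty$ and finite at some point) and lower semicontinuous; $X\subset\mathbb{R}^n$ is a nonempty closed set with $\operatorname{dom}f\cap X$ unbounded. $X^\infty=\{u:\exists t_k\to+\infty,\ \exists x_k\in X,\ x_k/t_k\to u\}$; $f^\infty(d)=\inf\{\liminf_{k} f(t_kd_k)/t_k:\ t_k\to+\infty,\ d_k\to d\}$; $\mathcal{K}(f)=\{d: f^\infty(d)\le 0\}$. For $u\in\mathbb{R}^n$, $f_u(x)=f(x)-\langle u,x\rangle$, and the optimal value function is $\mu(u)=\inf_{x\in X}f_u(x)$ (valued in $\mathbb{R}\cup\{\pm\infty\}$). Upper/lower semicontinuity of $\mu$ at $0$ means $\limsup_{u\to0}\mu(u)\le\mu(0)$ / $\liminf_{u\to0}\mu(u)\ge\mu(0)$. *)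

(* Defs.v *)
From HB Require Import structures.
From mathcomp Require Import all_boot all_order all_algebra.
From mathcomp Require Import all_classical all_reals all_analysis.
Set Implicit Arguments. Unset Strict Implicit. Unset Printing Implicit Defensive.
Import Order.TTheory GRing.Theory Num.Theory.
Import numFieldNormedType.Exports.
Local Open Scope classical_set_scope.
Local Open Scope ring_scope.

Section Defs.
Context {R : realType} {n : nat}.
Local Notation V := 'rV[R]_n.

Definition dotp (u x : V) : R := \sum_(i < n) u ord0 i * x ord0 i.

Definition proper_fun (f : V -> \bar R) : Prop :=
  (forall x, f x != -oo%E) /\ (exists x, f x \is a fin_num).

Definition domf (f : V -> \bar R) : set V := [set x | (f x < +oo)%E].

Definition unbounded_set (A : set V) : Prop :=
  ~ (exists M : R, forall x, A x -> `|x| <= M).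

Definition asym_cone (X : set V) : set V :=
  [set u | exists (t : nat -> R) (x : nat -> V),
     t @ \oo --> +oo /\ (forall k, X (x k)) /\
     (fun k => (t k)^-1 *: x k) @ \oo --> u].

Definition asym_fun (f : V -> \bar R) (d : V) : \bar R :=
  ereal_inf [set l | exists (t : nat -> R) (dk : nat -> V),
     [/\ t @ \oo --> +oo, dk @ \oo --> d &
      l = limn_einf (fun k => (f (t k *: dk k) * ((t k)^-1)%:E)%E)]].

Definition Kf (f : V -> \bar R) : set V := [set d | (asym_fun f d <= 0)%E].

Definition fu (f : V -> \bar R) (u : V) (x : V) : \bar R :=
  (f x - (dotp u x)%:E)%E.

Definition optval (f : V -> \bar R) (X : set V) (u : V) : \bar R :=
  ereal_inf (fu f u @` X).

End Defs.

(* Main.v *)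
Require Import Defs.
From HB Require Import structures.
From mathcomp Require Import all_boot all_order all_algebra.
From mathcomp Require Import all_classical all_reals all_analysis.
From mathcomp Require Import lra zify.
Import Order.TTheory GRing.Theory Num.Theory.
Import numFieldNormedType.Exports.
Local Open Scope classical_set_scope.
Local Open Scope ring_scope.



Lemma edense (R : realType) (x y : \bar R) : (x < y)%E ->
  exists r : R, (x < r%:E)%E /\ (r%:E < y)%E.
Proof.
case: x => [x||]; case: y => [y||] //=.
- rewrite lte_fin => xy; exists ((x + y) / 2)%R; rewrite !lte_fin; split; lra.
- by move=> _; exists (x + 1)%R; split; [rewrite lte_fin; lra| exact: ltry].
- by move=> _; exists (y - 1)%R; split; [exact: ltNyr| rewrite lte_fin; lra].
- by move=> _; exists 0%R; split; [exact: ltNyr| exact: ltry].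
Qed.

Lemma le_by_reals (R : realType) (x y : \bar R) :
  (forall a : R, (y < a%:E)%E -> (x <= a%:E)%E) -> (x <= y)%E.
Proof.
move=> H; rewrite leNgt; apply/negP => /edense [r [yr rx]].
by move: (H r yr); rewrite leNgt rx.
Qed.

Lemma ge_by_reals (R : realType) (x y : \bar R) :
  (forall b : R, (b%:E < y)%E -> (b%:E <= x)%E) -> (y <= x)%E.
Proof.
move=> H; rewrite leNgt; apply/negP => /edense [r [xr ry]].
by move: (H r ry); rewrite leNgt xr.
Qed.

Lemma coord_le (R : realType) n (v : 'rV[R]_n) i : `|v ord0 i| <= `|v|.
Proof.
have /mapP[j Hj ->] : `|v ord0 i| \in [seq `|v x.1 x.2| | x : 'I_1 * 'I_n].
  by apply/mapP; exists (ord0, i) => //=; rewrite mem_enum.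
by rewrite [leRHS]/Num.norm /= mx_normrE; apply/bigmax_geP; right => /=; exists j.
Qed.

Lemma dotp_bound (R : realType) n (u x : 'rV[R]_n) :
  `|dotp u x| <= n%:R * (`|u| * `|x|).
Proof.
rewrite /dotp; apply: le_trans (ler_norm_sum _ _ _) _.
have -> : n%:R * (`|u| * `|x|) = \sum_(i < n) (`|u| * `|x|).
  by rewrite sumr_const card_ord mulr_natl.
apply: ler_sum => i _; rewrite normrM.
by apply: ler_pM => //; apply: coord_le.
Qed.

Lemma dotp0 (R : realType) n (x : 'rV[R]_n) : dotp 0 x = 0.
Proof. by rewrite /dotp big1 // => i _; rewrite mxE mul0r. Qed.



Lemma usc_near (R : realType) n (f : 'rV[R]_n -> \bar R) (X : set 'rV[R]_n)
  (fP : forall x, f x != -oo%E) (a : R) :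
  (optval f X 0 < a%:E)%E ->
  exists2 V, nbhs (0 : 'rV[R]_n) V & forall u, V u -> (optval f X u < a%:E)%E.
Proof.
move=> /ereal_inf_lt [_ [x0 Xx0 <-]]; rewrite /fu dotp0 sube0 => hx0.
have [r E] : exists r, f x0 = r%:E.
  move: hx0 (fP x0); case: (f x0) => [r _ _|//|//]; by exists r.
move: hx0; rewrite E lte_fin => hr.
pose c : R := n%:R * `|x0|.
have c0 : 0 <= c by rewrite /c mulr_ge0.
have c1 : 0 < c + 1 by lra.
pose d := (a - r) / (c + 1).
have d0 : 0 < d by rewrite /d divr_gt0 //; lra.
exists (ball 0 d); first exact: nbhsx_ballx.
move=> u; rewrite -ball_normE /ball_ /= sub0r normrN => hu.
apply: (@le_lt_trans _ _ (fu f u x0)); first by apply: ereal_inf_lbound; exists x0.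
rewrite /fu E -EFinD lte_fin.
have h1 := @dotp_bound R n u x0.
have h2 : (c + 1) * `|u| < a - r.
  have hd : d * (c + 1) = a - r.
    by rewrite /d mulfVK // gt_eqF.
  rewrite -hd; nra.
have h3 : n%:R * (`|u| * `|x0|) = c * `|u| by rewrite /c mulrCA mulrC.
rewrite h3 in h1.
have h4 := ler_norm (- dotp u x0); rewrite normrN in h4.
have h5 : 0 <= `|u| by [].
nra.
Qed.



Lemma cluster_closed (T : topologicalType) (F : set_system T) (C : set T) y :
  cluster F y -> F C -> closed C -> C y.
Proof.
move=> cly FC Ccl; apply: Ccl => B hB; exact: cly.
Qed.

Lemma closed_normle (R : realType) n (M : R) :
  closed [set v : 'rV[R]_n | `|v| <= M].
Proof.
have hc : closed [set x : R | x <= M] by apply: closed_le.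
exact: ((continuous_closedP _).1 (@norm_continuous R 'rV[R]_n) _ hc).
Qed.

Lemma closed_normge (R : realType) n (M : R) :
  closed [set v : 'rV[R]_n | M <= `|v|].
Proof.
have hc : closed [set x : R | M <= x] by apply: closed_ge.
exact: ((continuous_closedP _).1 (@norm_continuous R 'rV[R]_n) _ hc).
Qed.

Lemma archN (R : realType) (c : R) : exists N : nat, c < N%:R.
Proof.
exists (Num.bound `|c|); apply: le_lt_trans (ler_norm c) _.
exact: archi_boundP.
Qed.
Arguments archN {R}.

Lemma cvg_inv_seq (R : realType) n (a : nat -> 'rV[R]_n) (d : 'rV[R]_n) :
  (forall j, `|d - a j| < (j.+1%:R)^-1) -> a @ \oo --> d.
Proof.
move=> H; apply/cvgrPdist_lt => e e0.
have [N hN] := archN e^-1.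
exists N => // j /= hj; apply: lt_trans (H j) _.
rewrite -[e in _ < e]invrK ltf_pV2 ?posrE ?invr_gt0 ?ltr0n //.
apply: lt_le_trans hN _; rewrite ler_nat; lia.
Qed.

Lemma sublevel_closed (R : realType) n (f : 'rV[R]_n -> \bar R) (a : R) :
  lower_semicontinuous f -> closed [set z | (f z <= a%:E)%E].
Proof.
move=> /lower_semicontinuousP /(_ a) op.
have -> : [set z | (f z <= a%:E)%E] = ~` [set z | (a%:E < f z)%E].
  by apply/seteqP; split => z /=; rewrite leNgt => /negP.
exact: open_closedC.
Qed.

Arguments cluster_closed {T F C y}.
Arguments sublevel_closed {R n f}.
Arguments closed_normle {R n}.
Arguments closed_normge {R n}.
Arguments cvg_inv_seq {R n a d}.



Lemma cvg_from_bounds (R : realType) (T : Type) (F : set_system T)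
  (FF : ProperFilter F) (g : T -> \bar R) (l : \bar R) :
  (forall a : R, (l < a%:E)%E -> \forall x \near F, (g x < a%:E)%E) ->
  (forall b : R, (b%:E < l)%E -> \forall x \near F, (b%:E < g x)%E) ->
  g @ F --> l.
Proof.
case: l => [r||] Ha Hb.
- apply/fine_cvgP; split.
    apply: filterS2 (Ha (r + 1) _) (Hb (r - 1) _); rewrite ?lte_fin; try lra.
    by move=> x; case: (g x).
  apply/cvgrPdist_lt => e e0.
  apply: filterS2 (Ha (r + e) _) (Hb (r - e) _); rewrite ?lte_fin; try lra.
  move=> x /=; case: (g x) => [s||] //=; rewrite !lte_fin => h1 h2.

  rewrite ltr_distlC; apply/andP; split; lra.
- apply/cvgeyPgt => A; exact: Hb A (ltry A).
- apply/cvgeNyPlt => A; exact: Ha A (ltNyr A).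
Qed.



Lemma lsc_core (R : realType) n (f : 'rV[R]_n -> \bar R) (X : set 'rV[R]_n)
  (fP : forall x, f x != -oo%E) (flsc : lower_semicontinuous f)
  (Xcl : closed X) (HK : asym_cone X `&` Kf f = [set 0]) (b : R) :
  (b%:E < optval f X 0)%E ->
  exists2 V, nbhs (0 : 'rV[R]_n) V &
    forall u, V u -> forall x, X x -> (b%:E <= fu f u x)%E.
Proof.
move=> hb.
have [//|Hno] := pselect (exists2 V, nbhs (0 : 'rV[R]_n) V &
    forall u, V u -> forall x, X x -> (b%:E <= fu f u x)%E).
exfalso.
have H : forall k : nat, exists t : 'rV[R]_n * 'rV[R]_n * R,
   [/\ `|t.1.1| < (k.+1%:R)^-1, X t.1.2, f t.1.2 = t.2%:E &
       t.2 < b + dotp t.1.1 t.1.2].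
  move=> k; apply: contrapT => Hk; apply: Hno.
  exists (ball 0 (k.+1%:R)^-1); first by apply: nbhsx_ballx; rewrite invr_gt0 ltr0n.
  move=> u; rewrite -ball_normE /ball_ /= sub0r normrN => hu x Xx.
  rewrite leNgt; apply/negP => hlt; apply: Hk.
  have fx := fP x.
  move: hlt; rewrite /fu.
  case E: (f x) fx => [r||] //= _.
  rewrite -EFinD lte_fin => hr; exists (u, x, r); split => //=; lra.
have [g Hg] := choice H.
pose u k := (g k).1.1. pose x k := (g k).1.2. pose r k := (g k).2.
have hu k : `|u k| < (k.+1%:R)^-1 by have [] := Hg k.
have hX k : X (x k) by have [] := Hg k.
have hf k : f (x k) = (r k)%:E by have [] := Hg k.
have hr k : r k < b + dotp (u k) (x k) by have [] := Hg k.
have hmu0 y : X y -> (optval f X 0 <= f y)%E.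
  move=> Xy; rewrite -(_ : fu f 0 y = f y); last by rewrite /fu dotp0 sube0.
  by apply: ereal_inf_lbound; exists y.
have [[M [N hM]]|HB] := pselect (exists M : R, exists N : nat,
    forall k, (N <= k)%N -> `|x k| <= M).
- have M0 : 0 <= M by apply: le_trans (hM N (leqnn N)).
  pose K := X `&` [set v | `|v| <= M].
  have Kc : compact K.
    apply: bounded_closed_compact; last exact: closedI Xcl (closed_normle M).
    exists M; split; first exact: num_real.
    by move=> M' hM' v [_ hv]; apply: le_trans hv (ltW hM').
  have FK : (x @ \oo) K.
    by exists N => // k /= hk; split; [exact: hX | exact: hM].
  have [y [Ky cly]] := Kc _ _ FK.
  have fyb : (f y <= b%:E)%E.
    apply: le_by_reals => a ha; rewrite lte_fin in ha.
    apply: (cluster_closed cly _ (sublevel_closed a flsc)).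
    have [N2 hN2] := archN (n%:R * M / (a - b)).
    exists (maxn N N2) => // k /= hk.
    rewrite hf lee_fin.
    have hk1 : (N <= k)%N by lia.
    have hk2 : (N2 <= k.+1)%N by lia.
    have h1 := @dotp_bound R n (u k) (x k).
    have h2 : `|x k| <= M := hM k hk1.
    pose q : R := (k.+1%:R)^-1.
    have q0 : 0 < q by rewrite /q invr_gt0 ltr0n.
    have qk : q * k.+1%:R = 1 by rewrite /q mulVf // pnatr_eq0.
    have hNM : n%:R * M <= (a - b) * k.+1%:R.
      have ab : 0 < a - b by lra.
      move: hN2; rewrite ltr_pdivrMr // => hN2.
      apply: le_trans (ltW hN2) _; rewrite mulrC ler_wpM2l ?ler_nat //; lra.
    have h3 : n%:R * (`|u k| * `|x k|) <= n%:R * (q * M).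
      by apply: ler_wpM2l => //; apply: ler_pM => //; apply: ltW; exact: hu.
    have h5 : n%:R * (q * M) <= a - b.
      have e1 : n%:R * (q * M) = (n%:R * M) * q by rewrite mulrCA mulrC.
      have e2 : (a - b) * k.+1%:R * q = a - b.
        by rewrite -mulrA [k.+1%:R * q]mulrC qk mulr1.
      by rewrite e1 -e2 ler_wpM2r // ltW.
    have h4 := ler_norm (dotp (u k) (x k)).
    have := hr k; lra.
  have := lt_le_trans hb (le_trans (hmu0 y Ky.1) fyb).
  by rewrite ltxx.
- have HB' : forall (M : R) (N : nat), exists k, (N <= k)%N /\ M < `|x k|.
    move=> M N; apply: contrapT => hn; apply: HB; exists M, N => k0 hk.
    by rewrite leNgt; apply/negP => hlt; apply: hn; exists k0.
  pose dd k := (`|x k|)^-1 *: x k.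
  pose B (p : nat * nat) := [set k | (p.1 <= k)%N /\ p.2%:R < `|x k|].
  pose G := filter_from setT B.
  have GF : Filter G.
    apply: filter_from_filter; first by exists (0,0)%N.
    move=> i j _ _; exists (maxn i.1 j.1, maxn i.2 j.2) => // k [/= h1 h2].
    split; split.
    - by apply: leq_trans h1; rewrite leq_maxl.
    - by apply: le_lt_trans h2; rewrite ler_nat leq_maxl.
    - by apply: leq_trans h1; rewrite leq_maxr.
    - by apply: le_lt_trans h2; rewrite ler_nat leq_maxr.
  have GP : ProperFilter G.
    apply: filter_from_proper => -[N M] _.
    by have [k [hk1 hk2]] := HB' M%:R N; exists k.
  pose Sph := [set v : 'rV[R]_n | `|v| = 1].
  have Sc : compact Sph.
    apply: bounded_closed_compact.
      by exists 1; split => // M' hM' v /= ->; exact: ltW.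
    have -> : Sph = [set v | `|v| <= 1] `&` [set v | 1 <= `|v|].
      apply/seteqP; split => v /=; first by move=> ->.
      by move=> [h1 h2]; apply/eqP; rewrite eq_le h1 h2.
    exact: closedI (closed_normle 1) (closed_normge 1).
  have GS : (dd @ G) Sph.
    exists (0,0)%N => // k /= [_ hk].
    rewrite /Sph /dd /= normrZ normrV ?unitfE ?normr_id ?mulVf //.
    1,2: by apply/eqP => h; move: hk; rewrite h /= ltxx.
  have [d [Sd cld]] := Sc _ _ GS.
  have Hm : forall j : nat, exists m : nat,
      [/\ (j <= m)%N, j.+1%:R < `|x m| & `|d - dd m| < (j.+1%:R)^-1].
    move=> j.
    have hA : (dd @ G) (dd @` B (j, j.+1)).
      by exists (j, j.+1) => // k hk; exists k.
    have hBall : nbhs d (ball d (j.+1%:R)^-1).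
      by apply: nbhsx_ballx; rewrite invr_gt0 ltr0n.
    have [z [[m [hm1 hm2] <-] hz]] := cld _ _ hA hBall.
    by exists m; split => //; move: hz; rewrite -ball_normE /ball_ /=.
  have [m Hm'] := choice Hm.
  have hm1 j : (j <= m j)%N by have [] := Hm' j.
  have hm2 j : j.+1%:R < `|x (m j)| by have [] := Hm' j.
  have hm3 j : `|d - dd (m j)| < (j.+1%:R)^-1 by have [] := Hm' j.
  pose t j := `|x (m j)|.
  have tpos j : 0 < t j by apply: lt_trans (hm2 j); rewrite ltr0n.
  have tcvg : t @ \oo --> +oo.
    apply/cvgryPge => A; have [N hN] := archN A; exists N => // j /= hj.
    apply: le_trans (ltW hN) _; apply: le_trans (ltW (hm2 j)).
    rewrite ler_nat; lia.
  have dcvg : (fun j => (t j)^-1 *: x (m j)) @ \oo --> d.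
    exact: cvg_inv_seq hm3.
  have dX : asym_cone X d.
    by exists t, (fun j => x (m j)); split.
  have dK : Kf f d.
    rewrite /Kf /asym_fun /=.
    apply: ge_ereal_inf.
    exists (limn_einf (fun k => (f (t k *: dd (m k)) * ((t k)^-1)%:E)%E)).
      by exists t, (fun j => dd (m j)); split.
    apply: le_by_reals => a ha; rewrite lte_fin in ha.
    rewrite [X in (X <= _)%E](_ : _ = limf_einf
      (fun k => (f (t k *: dd (m k)) * ((t k)^-1)%:E)%E) \oo) //.
    rewrite limf_einfE.
    apply: ge_ereal_sup => _ [V [N _ hV] <-].
    have [N2 hN2] := archN ((`|b| + n%:R) / a).
    pose j := maxn N N2.
    apply: ge_ereal_inf; exists (f (t j *: dd (m j)) * ((t j)^-1)%:E)%E.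
      by exists j => //; apply: hV; rewrite /= leq_maxl.
    have -> : t j *: dd (m j) = x (m j).
      by rewrite /dd scalerA mulfV ?scale1r // gt_eqF // tpos.
    rewrite hf -EFinM lee_fin.
    have hT : j.+1%:R < t j := hm2 j.
    have T0 := tpos j.
    pose q : R := (j.+1%:R)^-1.
    have q0 : 0 < q by rewrite /q invr_gt0 ltr0n.
    have qk : q * j.+1%:R = 1 by rewrite /q mulVf // pnatr_eq0.
    have huq : `|u (m j)| <= q.
      apply: ltW; apply: lt_le_trans (hu (m j)) _.
      rewrite lef_pV2 ?posrE ?ltr0n // ler_nat; have := hm1 j; lia.
    have hdot := @dotp_bound R n (u (m j)) (x (m j)).
    have hab : `|b| + n%:R <= a * j.+1%:R.
      move: hN2; rewrite ltr_pdivrMr // => h; apply: le_trans (ltW h) _.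
      rewrite mulrC ler_wpM2l ?ler_nat; [|lra|]; rewrite /j; lia.
    rewrite ler_pdivrMr //.
    pose P := q * t j.
    have P1 : 1 <= P.
      by rewrite /P -qk; apply: ler_wpM2l; [exact: ltW | exact: ltW].
    have h6 : (`|b| + n%:R) * P <= (a * j.+1%:R) * P.
      by apply: ler_wpM2r => //; lra.
    have h7 : `|b| <= `|b| * P by rewrite ler_peMr.
    have h8 : a * t j = (a * j.+1%:R) * P.
      by rewrite /P mulrA -[a * _ * q]mulrA [_ * q]mulrC qk mulr1.
    have h9 : n%:R * (`|u (m j)| * `|x (m j)|) <= n%:R * P.
      by apply: ler_wpM2l => //; rewrite /P; apply: ler_wpM2r => //; exact: ltW.
    have h10 := hr (m j).
    have h11 := ler_norm (dotp (u (m j)) (x (m j))).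
    have h12 := ler_norm b.
    rewrite h8; lra.
  have hd : d = 0.
    have : (asym_cone X `&` Kf f) d by [].
    by rewrite HK.
  by move: Sd; rewrite /Sph /= hd normr0 => /eqP; rewrite eq_sym oner_eq0.
Qed.



Theorem mainTheorem8 (R : realType) (n : nat) (f : 'rV[R]_n -> \bar R)
  (X : set 'rV[R]_n) :
  proper_fun f -> lower_semicontinuous f ->
  closed X -> X !=set0 -> unbounded_set (domf f `&` X) ->
  (* (a) upper semicontinuity of mu at 0 *)
  (limf_esup (optval f X) (nbhs (0%R : 'rV[R]_n)) <= optval f X (0%R : 'rV[R]_n))%E /\
  (* (b) *)
  (asym_cone X `&` Kf f = [set 0] ->
     (limf_einf (optval f X) (nbhs (0%R : 'rV[R]_n)) >= optval f X (0%R : 'rV[R]_n))%E /\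
     optval f X u @[u --> (0%R : 'rV[R]_n)] --> optval f X (0%R : 'rV[R]_n)).
Proof.
move=> [fP _] flsc Xcl _ _.
split.
  apply: le_by_reals => a ha.
  have [V hV Vmu] := @usc_near R n f X fP a ha.
  rewrite limf_esupE; apply: ge_ereal_inf.
  exists (ereal_sup (optval f X @` V)); first by exists V.
  by apply: ge_ereal_sup => _ [u Vu <-]; apply/ltW/Vmu.
move=> HK.
have lsc b : (b%:E < optval f X 0)%E ->
    exists2 V, nbhs (0 : 'rV[R]_n) V & forall u, V u -> (b%:E <= optval f X u)%E.
  move=> hb; have [V hV HV] := @lsc_core R n f X fP flsc Xcl HK b hb.
  exists V => // u Vu; apply: le_ereal_inf_tmp => _ [x Xx <-]; exact: HV.
split.
  apply: ge_by_reals => b hb; have [V hV HV] := lsc b hb.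
  rewrite limf_einfE; apply: le_ereal_sup_tmp.
  exists (ereal_inf (optval f X @` V)); first by exists V.
  by apply: le_ereal_inf_tmp => _ [u Vu <-]; exact: HV.
apply: (@cvg_from_bounds R _ _ (@nbhs_pfilter _ (0 : 'rV[R]_n))).
- move=> a ha; have [V hV HV] := @usc_near R n f X fP a ha.
  exact: (filterS HV hV).
- move=> b hb; have [b' [bb' b'mu]] := @edense R _ _ hb.
  have [V hV HV] := lsc b' b'mu.
  apply: (filterS _ hV) => u /HV; exact: lt_le_trans.
Qed.
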